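(* Let $K$ be a commutative totally ordered quasi-field of characteristic $1$, and let $P,Q\in K[X_1,\dots,X_n]$. Suppose $x\in K^n$ is a zero of $P$ and that there exists a nonzero $R\in K[X_1,\dots,X_n]$ with $RP=RQ$. Then $x$ is also a zero of $Q$.
   Context: A quasi-field of characteristic $1$ (idempotent semifield) is a commutative semiring $K$ (with additive neutral $0$ and unit $1$) such that $1+1=1$ (hence $x+x=x$ for all $x$) and every nonzero element is invertible for multiplication. It is ordered by $a\le b$ iff $a+b=b$; totally ordered means this order is total, so $a+b=\max(a,b)$. A point $x\in K^n$ is a zero of $P\in K[X_1,\dots,X_n]$ if one can write $P=P_1+P_2$ where $P_1,P_2$ have disjoint sets of monomials and $P_1(x)=P_2(x)$; for totally ordered $K$ this means that $P(x)=0$ or that the maximum of the values of the monomials of $P$ at $x$ is attained by at least two distinct monomials. *)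

(* Defs.v *)
From HB Require Import structures.
From mathcomp Require Import all_boot all_order all_algebra.
Set Implicit Arguments. Unset Strict Implicit. Unset Printing Implicit Defensive.
Import GRing.Theory.
Local Open Scope ring_scope.

Definition char1 (K : comNzSemiRingType) : Prop := (1 + 1 = 1 :> K).
Definition nonzero_invertible (K : comNzSemiRingType) : Prop :=
  forall x : K, x <> 0 -> exists y : K, x * y = 1.
Definition idem_le (K : comNzSemiRingType) (a b : K) : Prop := a + b = b.
Definition totally_ordered (K : comNzSemiRingType) : Prop :=
  forall a b : K, idem_le a b \/ idem_le b a.

Definition monom (n : nat) := {ffun 'I_n -> nat}.
Definition monom_add n (a b : monom n) : monom n := [ffun i => a i + b i].

(* polynomials: finite formal sums of terms *)
Definition mpoly (K : comNzSemiRingType) (n : nat) := seq (monom n * K).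

Definition mcoef (K : comNzSemiRingType) n (p : mpoly K n) (m : monom n) : K :=
  \sum_(t <- p | t.1 == m) t.2.

Definition msupp (K : comNzSemiRingType) n (p : mpoly K n) : seq (monom n) :=
  [seq m <- undup (map fst p) | mcoef p m != 0].

Definition mmul (K : comNzSemiRingType) n (p q : mpoly K n) : mpoly K n :=
  [seq (monom_add s.1 t.1, s.2 * t.2) | s <- p, t <- q].

Definition mpoly_eq (K : comNzSemiRingType) n (p q : mpoly K n) : Prop :=
  forall m, mcoef p m = mcoef q m.

Definition mpoly_nonzero (K : comNzSemiRingType) n (p : mpoly K n) : Prop :=
  exists m, mcoef p m <> 0.

Definition meval_mon (K : comNzSemiRingType) n (m : monom n) (x : 'I_n -> K) : K :=
  \prod_(i < n) x i ^+ m i.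

(* x is a zero of P: P = P1 + P2 with disjoint monomial sets and P1(x) = P2(x);
   P1 collects the monomials of P in S, P2 the others. *)
Definition is_zero_of (K : comNzSemiRingType) n (P : mpoly K n) (x : 'I_n -> K) : Prop :=
  exists S : pred (monom n),
    \sum_(m <- msupp P | S m) mcoef P m * meval_mon m x
    = \sum_(m <- msupp P | ~~ S m) mcoef P m * meval_mon m x.

(* Main.v *)
Require Import Defs.
From mathcomp Require Import all_boot all_order all_algebra.
From Stdlib Require Import ClassicalEpsilon FunctionalExtensionality Lia.
Set Implicit Arguments. Unset Strict Implicit. Unset Printing Implicit Defensive.
Import GRing.Theory.
Local Open Scope ring_scope.

Lemma addrr (K : comNzSemiRingType) (hc : char1 K) (a : K) : a + a = a.
Proof. by rewrite -{1 2}(mulr1 a) -mulrDr hc mulr1. Qed.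

Lemma le_refl' (K : comNzSemiRingType) (hc : char1 K) (a : K) : idem_le a a.
Proof. exact: addrr. Qed.

Lemma le_trans' (K : comNzSemiRingType) (a b c : K) :
  idem_le a b -> idem_le b c -> idem_le a c.
Proof. by rewrite /idem_le => Hab Hbc; rewrite -Hbc addrA Hab. Qed.

Lemma le_anti (K : comNzSemiRingType) (a b : K) :
  idem_le a b -> idem_le b a -> a = b.
Proof. by rewrite /idem_le => Hab Hba; rewrite -Hba addrC Hab. Qed.

Lemma le0 (K : comNzSemiRingType) (a : K) : idem_le 0 a.
Proof. exact: add0r. Qed.

Lemma le_addl (K : comNzSemiRingType) (hc : char1 K) (a b : K) : idem_le a (a + b).
Proof. by rewrite /idem_le addrA addrr. Qed.

Lemma le_addr (K : comNzSemiRingType) (hc : char1 K) (a b : K) : idem_le b (a + b).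
Proof. by rewrite /idem_le addrCA addrr. Qed.

Lemma add_le (K : comNzSemiRingType) (a b c : K) :
  idem_le a c -> idem_le b c -> idem_le (a + b) c.
Proof. by rewrite /idem_le => Ha Hb; rewrite -addrA Hb Ha. Qed.

Lemma le_mul (K : comNzSemiRingType) (a b c : K) :
  idem_le a b -> idem_le (a * c) (b * c).
Proof. by rewrite /idem_le => H; rewrite -mulrDl H. Qed.

Lemma le_mul2 (K : comNzSemiRingType) (a b c d : K) :
  idem_le a b -> idem_le c d -> idem_le (a * c) (b * d).
Proof.
move=> H1 H2; apply: (le_trans' (le_mul c H1)).
by rewrite ![b * _]mulrC; apply: le_mul.
Qed.

Lemma le0_eq (K : comNzSemiRingType) (a : K) : idem_le a 0 -> a = 0.
Proof. by rewrite /idem_le addr0. Qed.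

Lemma le_ne0 (K : comNzSemiRingType) (a b : K) : idem_le a b -> a <> 0 -> b <> 0.
Proof. by move=> H Ha Hb; apply: Ha; apply: le0_eq; rewrite -Hb. Qed.

Lemma mul_ne0 (K : comNzSemiRingType) (hinv : nonzero_invertible K) (a b : K) :
  a <> 0 -> b <> 0 -> a * b <> 0.
Proof.
move=> Ha Hb Hab; case: (hinv a Ha) => z Hz; apply: Hb.
by rewrite -(mul1r b) -Hz mulrAC Hab mul0r.
Qed.

Lemma mul_cancel (K : comNzSemiRingType) (hinv : nonzero_invertible K) (a b c : K) :
  c <> 0 -> a * c = b * c -> a = b.
Proof.
move=> Hc H; case: (hinv c Hc) => z Hz.
by rewrite -(mulr1 a) -(mulr1 b) -Hz !mulrA H.
Qed.

Lemma le_sum (K : comNzSemiRingType) (hc : char1 K) (I : eqType) (r : seq I)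
  (P : pred I) (F : I -> K) i :
  i \in r -> P i -> idem_le (F i) (\sum_(j <- r | P j) F j).
Proof.
elim: r => [|j r IH] //= Hi Pi; rewrite big_cons.
move: Hi; rewrite in_cons => /orP [/eqP <-|Hi].
  by rewrite Pi; apply: le_addl.
have := IH Hi Pi; case: (P j) => // H; apply: (le_trans' H); exact: le_addr.
Qed.

Lemma sum_le (K : comNzSemiRingType) (I : eqType) (r : seq I)
  (P : pred I) (F : I -> K) c :
  (forall i, i \in r -> P i -> idem_le (F i) c) -> idem_le (\sum_(j <- r | P j) F j) c.
Proof.
elim: r => [|j r IH] H; first by rewrite big_nil; apply: le0.
rewrite big_cons.
have H' : idem_le (\sum_(j <- r | P j) F j) c.
  by apply: IH => i Hi; apply: H; rewrite in_cons Hi orbT.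
case Pj: (P j) => //; apply: add_le => //; apply: H => //; exact: mem_head.
Qed.

Lemma sum_attain (K : comNzSemiRingType) (htot : totally_ordered K) (I : eqType) (r : seq I)
  (P : pred I) (F : I -> K) :
  \sum_(j <- r | P j) F j = 0 \/
  exists i, [/\ i \in r, P i & \sum_(j <- r | P j) F j = F i].
Proof.
elim: r => [|j r IH]; first by left; rewrite big_nil.
rewrite big_cons; case Pj: (P j); last first.
  case: IH => [->|[i [Hi Pi ->]]]; first by left.
  by right; exists i; rewrite in_cons Hi orbT.
case: (htot (F j) (\sum_(j <- r | P j) F j)) => H.
  rewrite H; case: IH => [E|[i [Hi Pi E]]]; first by left.
  by right; exists i; rewrite in_cons Hi orbT.
right; exists j; split => //; first exact: mem_head.
by rewrite addrC.
Qed.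

Definition wt (K : comNzSemiRingType) n (x : 'I_n -> K) (m : monom n) : nat :=
  (\sum_(i < n) (x i == 0%R) * m i)%N.
Definition yv (K : comNzSemiRingType) n (x : 'I_n -> K) (i : 'I_n) : K :=
  if x i == 0 then 1 else x i.

Lemma monom_addC n (a b : monom n) : monom_add a b = monom_add b a.
Proof. by apply/ffunP => i; rewrite !ffunE; apply: addnC. Qed.

Lemma monom_addI n (a b c : monom n) : monom_add a c = monom_add b c -> a = b.
Proof.
move=> H; apply/ffunP => i; move/ffunP: H => /(_ i); rewrite !ffunE.
by move/addIn.
Qed.

Lemma wt_add (K : comNzSemiRingType) n (x : 'I_n -> K) a b :
  wt x (monom_add a b) = (wt x a + wt x b)%N.
Proof. by rewrite /wt -big_split; apply: eq_bigr => i _; rewrite ffunE mulnDr. Qed.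

Lemma meval_add (K : comNzSemiRingType) n (y : 'I_n -> K) a b :
  meval_mon (monom_add a b) y = meval_mon a y * meval_mon b y.
Proof. by rewrite /meval_mon -big_split; apply: eq_bigr => i _; rewrite ffunE exprD. Qed.

Lemma expr_ne0 (K : comNzSemiRingType) (hinv : nonzero_invertible K) (a : K) k :
  a <> 0 -> a ^+ k <> 0.
Proof.
move=> Ha; elim: k => [|k IH]; first by rewrite expr0; apply/eqP; exact: oner_neq0.
by rewrite exprS; apply: mul_ne0.
Qed.

Lemma meval_y_ne0 (K : comNzSemiRingType) (hinv : nonzero_invertible K) n
  (x : 'I_n -> K) m : meval_mon m (yv x) <> 0.
Proof.
rewrite /meval_mon; apply: (big_ind (fun z : K => z <> 0)).
- by apply/eqP; exact: oner_neq0.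
- by move=> a b; apply: mul_ne0.
move=> i _; apply: expr_ne0 => //; rewrite /yv; case: eqP => //.
by move=> _; apply/eqP; exact: oner_neq0.
Qed.

Lemma meval_split (K : comNzSemiRingType) n (x : 'I_n -> K) m :
  meval_mon m x = if (wt x m == 0)%N then meval_mon m (yv x) else 0.
Proof.
case E: (wt x m == 0)%N.
  have Hi i : ((x i == 0%R) * m i = 0)%N.
    move/eqP: E; rewrite /wt (bigD1 i) //= => /eqP; rewrite addn_eq0.
    by case/andP => /eqP.
  rewrite /meval_mon; apply: eq_bigr => i _; rewrite /yv.
  have := Hi i; case Ex: (x i == 0%R) => //; rewrite mul1n => ->.
  by rewrite !expr0.
case: (pickP (fun i => (x i == 0%R) * m i != 0)%N) => [i Hi | H]; last first.
  move: E; rewrite /wt big1 // => i _; apply/eqP; by move/negbFE: (H i).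
rewrite /meval_mon (bigD1 i) //=.
move: Hi; case Ex: (x i == 0%R) => //; rewrite mul1n => Hm.
by rewrite (eqP Ex) expr0n (negbTE Hm) mul0r.
Qed.

Lemma mcoef_ne0_mem (K : comNzSemiRingType) n (F : mpoly K n) m :
  mcoef F m <> 0 -> m \in map fst F.
Proof.
move=> H; apply/negPn/negP => Hm; apply: H; rewrite /mcoef big1_seq //.
move=> t /andP [/eqP Ht Htin]; case/negP: Hm; rewrite -Ht; exact: map_f.
Qed.

Lemma mem_msupp (K : comNzSemiRingType) n (F : mpoly K n) m :
  (m \in msupp F) = (mcoef F m != 0).
Proof.
rewrite /msupp mem_filter mem_undup; case H: (mcoef F m == 0) => //=.
by apply/mcoef_ne0_mem/eqP; rewrite H.
Qed.

Lemma coef_le (K : comNzSemiRingType) (hc : char1 K) n (F : mpoly K n) t :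
  t \in F -> idem_le t.2 (mcoef F t.1).
Proof. by move=> Ht; rewrite /mcoef; apply: (le_sum hc (P := fun u => u.1 == t.1)). Qed.

Lemma mul_coef_le (K : comNzSemiRingType) (hc : char1 K) n (R P : mpoly K n) a b :
  idem_le (mcoef R a * mcoef P b) (mcoef (mmul R P) (monom_add a b)).
Proof.
rewrite {1}/mcoef mulr_suml; apply: sum_le => s Hs /eqP Hsa.
rewrite /mcoef mulr_sumr; apply: sum_le => t Ht /eqP Htb.
apply: (le_sum hc (fun u : monom n * K => u.2) (i := (monom_add s.1 t.1, s.2 * t.2))
  (P := fun u => u.1 == monom_add a b)).
  exact: (allpairs_f (fun s t => (monom_add s.1 t.1, s.2 * t.2)) Hs Ht).
by rewrite /= Hsa Htb.
Qed.

Lemma mul_coef_split (K : comNzSemiRingType) (hc : char1 K) (htot : totally_ordered K)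
  n (R P : mpoly K n) m :
  mcoef (mmul R P) m <> 0 ->
  exists a b, m = monom_add a b /\ mcoef (mmul R P) m = mcoef R a * mcoef P b.
Proof.
move=> H; case: (sum_attain htot (mmul R P) (fun u => u.1 == m) (fun u => u.2))
  => [E|[u [Hu /eqP Pu E]]]; first by case: H; rewrite /mcoef E.
case/allpairsP: Hu => [[s t] [/= Hs Ht Eu]].
exists s.1, t.1; split; first by rewrite -Pu Eu.
apply: le_anti.
  rewrite /mcoef E Eu /=; apply: le_mul2; exact: coef_le.
rewrite -Pu Eu; exact: mul_coef_le.
Qed.

Definition kle (K : comNzSemiRingType) (k1 k2 : nat * K) : Prop :=
  (k2.1 <= k1.1)%N /\ (k1.1 = k2.1 -> idem_le k1.2 k2.2).
Definition kmul (K : comNzSemiRingType) (k1 k2 : nat * K) : nat * K :=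
  ((k1.1 + k2.1)%N, k1.2 * k2.2).

Lemma kle_trans (K : comNzSemiRingType) (a b c : nat * K) :
  kle a b -> kle b c -> kle a c.
Proof.
case=> [H1 H2] [H3 H4]; split; first exact: leq_trans H3 H1.
move=> E; have E1 : a.1 = b.1.
  by apply/eqP; rewrite eqn_leq H1 E H3.
apply: le_trans' (H2 E1) (H4 _); by rewrite -E1.
Qed.

Lemma kle_total (K : comNzSemiRingType) (htot : totally_ordered K) (a b : nat * K) :
  kle a b \/ kle b a.
Proof.
case: (leqP b.1 a.1) => H.
  case: (ltnP b.1 a.1) => H'.
    by left; split => // E; move: H'; rewrite E ltnn.
  have E : a.1 = b.1 by apply/eqP; rewrite eqn_leq H H'.
  by case: (htot a.2 b.2) => Hk; [left|right]; split => //; rewrite ?E ?leqnn.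
by right; split; [exact: ltnW | move=> E; move: H; rewrite E ltnn].
Qed.

Lemma kle_anti_w (K : comNzSemiRingType) (a b : nat * K) :
  kle a b -> kle b a -> a.1 = b.1.
Proof. by case=> H1 _ [H2 _]; apply/eqP; rewrite eqn_leq H1 H2. Qed.

Lemma kle_mul (K : comNzSemiRingType) (a b c d : nat * K) :
  kle a b -> kle c d -> kle (kmul a c) (kmul b d).
Proof.
case=> [H1 H2] [H3 H4]; split; first exact: leq_add.
rewrite /= => E.
have E1 : a.1 = b.1.
  move/leP: H1; move/leP: H3; rewrite -!plusE in E; lia.
have E2 : c.1 = d.1.
  move/leP: H1; move/leP: H3; rewrite -!plusE in E; lia.
exact: le_mul2 (H2 E1) (H4 E2).
Qed.

Lemma kle_cancel (K : comNzSemiRingType) (hinv : nonzero_invertible K) (a b c : nat * K) :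
  c.2 <> 0 -> kle (kmul a c) (kmul b c) -> kle a b.
Proof.
move=> Hc [/= H1 H2]; split; first by rewrite leq_add2r in H1.
move=> E; have := H2 (congr1 (addn^~ c.1) E); rewrite /idem_le -mulrDl.
exact: mul_cancel.
Qed.

Lemma list_max (K : comNzSemiRingType) (htot : totally_ordered K) (T : eqType)
  (f : T -> nat * K) (s : seq T) :
  s <> [::] -> exists m, m \in s /\ forall m', m' \in s -> kle (f m') (f m).
Proof.
elim: s => [//|j s IH] _.
case: s IH => [|j' s] IH.
  exists j; split; first exact: mem_head.
  move=> m'; rewrite inE => /eqP ->; split => // _.
  case: (htot (f j).2 (f j).2) => //.
case: IH => // m [Hm Hmax].
case: (kle_total htot (f j) (f m)) => H.
  exists m; split; first by rewrite in_cons Hm orbT.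
  by move=> m'; rewrite in_cons => /orP [/eqP ->|]; [|apply: Hmax].
exists j; split; first exact: mem_head.
move=> m'; rewrite in_cons => /orP [/eqP ->|Hm']; last exact: kle_trans (Hmax _ Hm') H.
case: (htot (f j).2 (f j).2) => Hj; by split.
Qed.


Definition key (K : comNzSemiRingType) n (x : 'I_n -> K) (c : monom n -> K) (m : monom n) :=
  (wt x m, c m * meval_mon m (yv x)).

Definition Opt (K : comNzSemiRingType) n (x : 'I_n -> K) (c : monom n -> K) (m : monom n) :=
  c m <> 0 /\ forall m', c m' <> 0 -> kle (key x c m') (key x c m).

Definition prod_rel (K : comNzSemiRingType) n (cA cB cC : monom n -> K) :=
  (forall a b, idem_le (cA a * cB b) (cC (monom_add a b))) /\
  (forall m, cC m <> 0 -> exists a b, m = monom_add a b /\ cC m = cA a * cB b).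

Lemma prod_rel_sym (K : comNzSemiRingType) n (cA cB cC : monom n -> K) :
  prod_rel cA cB cC -> prod_rel cB cA cC.
Proof.
case=> H1 H2; split.
  by move=> a b; rewrite mulrC monom_addC.
move=> m /H2 [a [b [-> E]]]; exists b, a; split; [exact: monom_addC | by rewrite E mulrC].
Qed.

Lemma prod_rel_mmul (K : comNzSemiRingType) (hc : char1 K) (htot : totally_ordered K)
  n (R P : mpoly K n) : prod_rel (mcoef R) (mcoef P) (mcoef (mmul R P)).
Proof.
split; first by move=> a b; apply: mul_coef_le.
by move=> m; apply: mul_coef_split.
Qed.

Lemma key_mul_le (K : comNzSemiRingType) n (x : 'I_n -> K) (cA cB cC : monom n -> K) a b :
  prod_rel cA cB cC ->
  kle (kmul (key x cA a) (key x cB b)) (key x cC (monom_add a b)).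
Proof.
case=> H _; split; rewrite /= wt_add ?leqnn // => _.
rewrite meval_add mulrACA; exact: le_mul.
Qed.

Lemma key_mul_eq (K : comNzSemiRingType) n (x : 'I_n -> K) (cA cB cC : monom n -> K) a b :
  cC (monom_add a b) = cA a * cB b ->
  key x cC (monom_add a b) = kmul (key x cA a) (key x cB b).
Proof. by move=> E; rewrite /key /kmul /= wt_add meval_add E mulrACA. Qed.

Lemma opt_mul (K : comNzSemiRingType) (hinv : nonzero_invertible K) n (x : 'I_n -> K)
  (cA cB cC : monom n -> K) a b :
  prod_rel cA cB cC -> Opt x cA a -> Opt x cB b -> Opt x cC (monom_add a b).
Proof.
move=> HP [Ha Hamax] [Hb Hbmax]; split.
  apply: le_ne0 (HP.1 a b) _; exact: mul_ne0.
move=> m' /[dup] Hm' /HP.2 [a' [b' [Em' E]]].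
have Ha' : cA a' <> 0 by move=> H; apply: Hm'; rewrite E H mul0r.
have Hb' : cB b' <> 0 by move=> H; apply: Hm'; rewrite E H mulr0.
have E' : cC (monom_add a' b') = cA a' * cB b' by rewrite -Em'.
rewrite Em' (key_mul_eq _ E').
apply: kle_trans (key_mul_le _ _ _ HP).
exact: kle_mul (Hamax _ Ha') (Hbmax _ Hb').
Qed.

Lemma opt_dec_l (K : comNzSemiRingType) (hinv : nonzero_invertible K) n (x : 'I_n -> K)
  (cA cB cC : monom n -> K) a b :
  prod_rel cA cB cC -> Opt x cC (monom_add a b) ->
  cC (monom_add a b) = cA a * cB b -> Opt x cA a.
Proof.
move=> HP [Hm Hmmax] E.
have Ha : cA a <> 0 by move=> H; apply: Hm; rewrite E H mul0r.
have Hb : cB b <> 0 by move=> H; apply: Hm; rewrite E H mulr0.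
split => // a' Ha'.
have H1 := Hmmax (monom_add a' b) (le_ne0 (HP.1 a' b) (mul_ne0 hinv Ha' Hb)).
have H2 := key_mul_le x a' b HP.
rewrite (key_mul_eq x E) in H1.
apply: (kle_cancel hinv (c := key x cB b)); last exact: kle_trans H2 H1.
by apply: mul_ne0 => //; apply: meval_y_ne0.
Qed.

Lemma opt_split (K : comNzSemiRingType) (hinv : nonzero_invertible K) n (x : 'I_n -> K)
  (cA cB cC : monom n -> K) m :
  prod_rel cA cB cC -> Opt x cC m ->
  exists a b, [/\ m = monom_add a b, Opt x cA a & Opt x cB b].
Proof.
move=> HP Hopt; case: (Hopt) => Hm _.
case: (HP.2 m Hm) => a [b [Em E]]; subst m.
exists a, b; split => //; first exact: opt_dec_l HP Hopt E.
apply: (@opt_dec_l K hinv n x cB cA cC b a (prod_rel_sym HP)).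
  by rewrite monom_addC.
by rewrite monom_addC E mulrC.
Qed.

Lemma opt_exists (K : comNzSemiRingType) (htot : totally_ordered K) n (x : 'I_n -> K)
  (F : mpoly K n) :
  (exists m, mcoef F m <> 0) -> exists m, Opt x (mcoef F) m.
Proof.
case=> m0 Hm0.
have Hin : m0 \in [seq m <- map fst F | mcoef F m != 0].
  by rewrite mem_filter; apply/andP; split; [apply/eqP | exact: mcoef_ne0_mem].
have Hne : [seq m <- map fst F | mcoef F m != 0] <> [::] by move=> E; rewrite E in Hin.
have [m [Hm Hmax]] := list_max htot (key x (mcoef F)) Hne.
exists m; split; first by move: Hm; rewrite mem_filter => /andP [/eqP].
move=> m' Hm'; apply: Hmax; rewrite mem_filter; apply/andP; split; [by apply/eqP | exact: mcoef_ne0_mem].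
Qed.

Lemma opt_w_eq (K : comNzSemiRingType) n (x : 'I_n -> K) (c : monom n -> K) a a' :
  Opt x c a -> Opt x c a' -> wt x a = wt x a'.
Proof. by case=> Ha Hamax [Ha' Ha'max]; apply: kle_anti_w (Ha'max _ Ha) (Hamax _ Ha'). Qed.

Lemma opt_w_le (K : comNzSemiRingType) n (x : 'I_n -> K) (c : monom n -> K) b m :
  Opt x c b -> c m <> 0 -> (wt x b <= wt x m)%N.
Proof. by case=> _ Hmax /Hmax []. Qed.

Lemma val_key (K : comNzSemiRingType) n (x : 'I_n -> K) (c : monom n -> K) m :
  wt x m = 0%N -> c m * meval_mon m x = (key x c m).2.
Proof. by move=> H; rewrite meval_split H eqxx. Qed.

Lemma val_pos (K : comNzSemiRingType) n (x : 'I_n -> K) (c : monom n -> K) m :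
  (0 < wt x m)%N -> c m * meval_mon m x = 0.
Proof. by move=> H; rewrite meval_split (negbTE (lt0n_neq0 H)) mulr0. Qed.

Lemma zout1 (K : comNzSemiRingType) n (F : mpoly K n) (x : 'I_n -> K) :
  (forall m, mcoef F m <> 0 -> (0 < wt x m)%N) -> is_zero_of F x.
Proof.
move=> H; exists (fun _ => true).
have Hz m : m \in msupp F -> mcoef F m * meval_mon m x = 0.
  by rewrite mem_msupp => /eqP Hm; apply: val_pos; apply: H.
rewrite !big1_seq // => m /andP [_ Hm]; exact: Hz.
Qed.

Lemma zout (K : comNzSemiRingType) (hc : char1 K) n (F : mpoly K n) (x : 'I_n -> K) :
  (forall m, mcoef F m <> 0 -> (0 < wt x m)%N) \/
  (exists m1 m2, [/\ m1 <> m2, Opt x (mcoef F) m1 & Opt x (mcoef F) m2]) ->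
  is_zero_of F x.
Proof.
case; first exact: zout1.
case=> m1 [m2 [Hne H1 H2]].
case: (posnP (wt x m1)) => Hw1; last first.
  apply: zout1 => m Hm; exact: leq_trans Hw1 (opt_w_le H1 Hm).
have Hw2 : wt x m2 = 0%N by rewrite -(opt_w_eq H1 H2).
have Hle m : m \in msupp F -> idem_le (mcoef F m * meval_mon m x) (mcoef F m1 * meval_mon m1 x).
  rewrite mem_msupp => /eqP Hm.
  case: (posnP (wt x m)) => Hw; last by rewrite val_pos //; apply: le0.
  rewrite !val_key //; case: H1 => _ /(_ m Hm) [_]; apply; by rewrite /= Hw Hw1.
have E21 : mcoef F m2 * meval_mon m2 x = mcoef F m1 * meval_mon m1 x.
  rewrite !val_key //; apply: le_anti.
    by case: H1 => _ /(_ m2 H2.1) [_]; apply; rewrite /= Hw1 Hw2.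
  by case: H2 => _ /(_ m1 H1.1) [_]; apply; rewrite /= Hw1 Hw2.
have Hm1 : m1 \in msupp F by rewrite mem_msupp; apply/eqP; case: H1.
have Hm2 : m2 \in msupp F by rewrite mem_msupp; apply/eqP; case: H2.
exists (fun m => m == m1); transitivity (mcoef F m1 * meval_mon m1 x).
  apply: le_anti.
    by apply: sum_le => m _ /eqP ->; apply: le_refl'.
  by apply: (le_sum hc (fun m => mcoef F m * meval_mon m x) Hm1).
apply: le_anti.
  rewrite -E21; apply: (le_sum hc (fun m => mcoef F m * meval_mon m x) Hm2).
  by apply/eqP => E; apply: Hne; rewrite E.
by apply: sum_le => m Hm _; apply: Hle.
Qed.

Lemma zin (K : comNzSemiRingType) (hc : char1 K) (htot : totally_ordered K)
  (hinv : nonzero_invertible K) n (F : mpoly K n) (x : 'I_n -> K) :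
  is_zero_of F x ->
  (forall m, mcoef F m <> 0 -> (0 < wt x m)%N) \/
  (exists m1 m2, [/\ m1 <> m2, Opt x (mcoef F) m1, Opt x (mcoef F) m2 & wt x m1 = 0%N]).
Proof.
case=> S E.
set v := mcoef F in E *.
set L := \sum_(m <- msupp F | S m) v m * meval_mon m x in E.
have Hall m : m \in msupp F -> idem_le (v m * meval_mon m x) L.
  move=> Hm; case Sm: (S m).
    by apply: (le_sum hc (fun m => v m * meval_mon m x) Hm).
  rewrite E; apply: (le_sum hc (fun m => v m * meval_mon m x) Hm).
  by rewrite Sm.
have [L0|Lne0] := eqVneq L 0.
  left => m Hm.
  have Hv : v m * meval_mon m x = 0.
    apply: le0_eq; rewrite -L0; apply: Hall; rewrite mem_msupp; exact/eqP.
  rewrite lt0n; apply/negP => /eqP Hw.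
  move: Hv; rewrite meval_split Hw eqxx; apply: mul_ne0 => //; exact: meval_y_ne0.
have Hopt m : m \in msupp F -> v m * meval_mon m x = L -> wt x m = 0%N /\ Opt x v m.
  move=> Hm Hval.
  have Hw : wt x m = 0%N.
    case: (posnP (wt x m)) => // Hw; move/eqP: Lne0; case.
    by rewrite -Hval val_pos.
  split => //; split; first by move: Hm; rewrite mem_msupp => /eqP.
  move=> m' Hm'; split; first by rewrite /= Hw.
  move=> /= Ew; have Ew0 : wt x m' = 0%N by rewrite Ew.
  have Hm'' : m' \in msupp F by rewrite mem_msupp; apply/eqP.
  have H := Hall m' Hm''.
  by rewrite -Hval (meval_split x m') (meval_split x m) Ew0 Hw eqxx in H.
right.
case: (sum_attain htot (msupp F) S (fun m => v m * meval_mon m x))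
  => [H0|[m1 [Hm1 S1 E1]]]; first by move: Lne0; rewrite /L H0 eqxx.
case: (sum_attain htot (msupp F) (fun m => ~~ S m) (fun m => v m * meval_mon m x))
  => [H0|[m2 [Hm2 S2 E2]]]; first by move: Lne0; rewrite E H0 eqxx.
have [Hw1 O1] := Hopt m1 Hm1 (esym E1).
have E2' : v m2 * meval_mon m2 x = L by rewrite -E2 E.
have [Hw2 O2] := Hopt m2 Hm2 E2'.
exists m1, m2; split => //.
by move=> E12; move: S2; rewrite -E12 S1.
Qed.

Lemma transl n (A : seq (monom n)) b1 b :
  uniq A -> A <> [::] ->
  (forall a, a \in A -> monom_add a b1 \in map (fun a => monom_add a b) A) -> b1 = b.
Proof.
move=> HA Hne H.
have Hinj c : injective (fun a : monom n => monom_add a c) by move=> u v; apply: monom_addI.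
have U1 : uniq (map (fun a => monom_add a b1) A) by rewrite map_inj_uniq.
have U2 : uniq (map (fun a => monom_add a b) A) by rewrite map_inj_uniq.
have Hsub : {subset map (fun a => monom_add a b1) A <= map (fun a => monom_add a b) A}.
  by move=> u /mapP [a Ha ->]; apply: H.
have Hsz : (size (map (fun a => monom_add a b) A) <= size (map (fun a => monom_add a b1) A))%N.
  by rewrite !size_map.
have [_ Heq] := uniq_min_size U1 Hsub Hsz.
have Hp := uniq_perm U1 U2 Heq.
have HsA : (0 < size A)%N by case: (A) Hne.
apply/ffunP => i.
have := @perm_big _ addn 0%N _ _ _ predT (fun u : monom n => u i) Hp.
rewrite !big_map.
under eq_bigr do rewrite ffunE.
under [in X in _ = X -> _]eq_bigr do rewrite ffunE.
rewrite !big_split /= => /addnI.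
rewrite !big_const_seq !count_predT !iter_addn_0 => /eqP.
by rewrite eqn_pmul2r // => /eqP.
Qed.

Definition pdec (Pr : Prop) : bool := if excluded_middle_informative Pr then true else false.

Lemma pdecP (Pr : Prop) : pdec Pr = true <-> Pr.
Proof. by rewrite /pdec; case: excluded_middle_informative. Qed.

Theorem proposition2p6 (K : comNzSemiRingType) (n : nat)
  (hchar : char1 K) (hinv : nonzero_invertible K) (htot : totally_ordered K)
  (P Q R : mpoly K n) (x : 'I_n -> K) :
  is_zero_of P x -> mpoly_nonzero R -> mpoly_eq (mmul R P) (mmul R Q) ->
  is_zero_of Q x.
Proof.
move=> HzP [r0 Hr0] Heq.
have E : mcoef (mmul R P) = mcoef (mmul R Q) := functional_extensionality _ _ Heq.
have HPP := prod_rel_mmul hchar htot R P.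
have HPQ := prod_rel_mmul hchar htot R Q.
have HPP' := HPP; rewrite E in HPP'.
have [a Ha] := opt_exists htot x (ex_intro (fun m => mcoef R m <> 0) r0 Hr0).
apply: (zout hchar).
case: (zin hchar htot hinv HzP) => [HP1 | [m1 [m2 [Hne O1 O2 Hw1]]]].
  left => m Hm.
  have [b Ob] := opt_exists htot x (ex_intro (fun m => mcoef Q m <> 0) m Hm).
  have O := opt_mul hinv HPQ Ha Ob.
  have [a' [b' [Eab Oa' Ob']]] := opt_split hinv HPP' O.
  have Hb' := HP1 _ Ob'.1.
  have := congr1 (wt x) Eab; rewrite !wt_add (opt_w_eq Ha Oa') => /addnI Hb.
  by apply: leq_trans (opt_w_le Ob Hm); rewrite Hb.
right.
case: (classic (exists b1 b2, [/\ b1 <> b2, Opt x (mcoef Q) b1 & Opt x (mcoef Q) b2])) => // HN.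
have Hu b1 b2 : Opt x (mcoef Q) b1 -> Opt x (mcoef Q) b2 -> b1 = b2.
  move=> Ob1 Ob2; case: (classic (b1 = b2)) => // Hn; exfalso; apply: HN.
  by exists b1, b2.
have O := opt_mul hinv HPP Ha O1; rewrite E in O.
have [a1 [b [_ _ Ob]]] := opt_split hinv HPQ O.
set A := [seq a <- undup (map fst R) | pdec (Opt x (mcoef R) a)].
have memA a0 : a0 \in A <-> Opt x (mcoef R) a0.
  rewrite mem_filter mem_undup; split.
    by case/andP => /pdecP.
  move=> Oa0; apply/andP; split; first by apply/pdecP.
  by apply: mcoef_ne0_mem; case: Oa0.
have UA : uniq A by rewrite filter_uniq // undup_uniq.
have NA : A <> [::] by move=> EA; have := (proj2 (memA a) Ha); rewrite EA.
have key_step mi : Opt x (mcoef P) mi -> mi = b.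
  move=> Omi; apply: (transl UA NA) => a0 /memA Oa0.
  have O' := opt_mul hinv HPP Oa0 Omi; rewrite E in O'.
  have [a'' [b'' [Eab Oa'' Ob'']]] := opt_split hinv HPQ O'.
  rewrite Eab (Hu _ _ Ob'' Ob); apply: map_f; exact/memA.
by case: Hne; rewrite (key_step _ O1) (key_step _ O2).
Qed.
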